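(* Let $n\ge 1$, let $D^{n+1}\subset\mathbb{R}^{n+1}$ be the closed unit disk and $S^n=\partial D^{n+1}$ the unit sphere. Let $U_1,\ldots,U_k\subset D^{n+1}$ be the pieces of a cleavage of $D^{n+1}$ by oriented affine hyperplanes (as described in the context), let $N_i=U_i\cap S^n$, let $c_i$ be the centre of mass of $U_i$, and let $\beta=\bigcup_{i=1}^k \partial U_i$ be the blueprint, where $\partial U_i$ denotes the frontier of $U_i$ in $D^{n+1}$. For $s\in S^n\setminus N_i$ let $l(s,c_i)$ be the line segment from $s$ to $c_i$. Define $$\alpha\colon \coprod_{i=1}^k \left(S^n\setminus N_i\right)\to \beta$$ by sending $s$ in the $i$-th summand to the point of $\beta$ that lies on $l(s,c_i)$ and on the boundary $\partial U_i$. Then $\alpha$ is well defined (for each such $s$ there is exactly one such point, and it lies in $\beta$), and the restriction of $\alpha$ to any single connected component of any one of the complements $S^n\setminus N_i$ is injective.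
   Context: A cleavage of $D^{n+1}$ into $k$ pieces is obtained recursively: an oriented affine hyperplane $P$ (an element of $\mathrm{Gr}_n(\mathbb{R}^{n+1})\times\mathbb{R}$) cuts the current piece $W$ (initially $D^{n+1}$) into two closed pieces $W\cap H^+$ and $W\cap H^-$, where $H^\pm$ are the two closed half-spaces bounded by $P$ (the first piece being the one in the direction of the normal vector of $P$), each required to have nonempty interior; each of these pieces is then further cut recursively by further hyperplanes, according to a binary rooted planar tree whose $k-1$ internal vertices are decorated by the hyperplanes $P_1,\ldots,P_{k-1}$. The resulting $k$ pieces $U_1,\ldots,U_k$ (outgoing colours) are each of the form $D^{n+1}\cap H_{1}\cap\cdots\cap H_{r}$ for closed half-spaces $H_j$ bounded by some of the hyperplanes $P_1,\dots,P_{k-1}$, and have nonempty interior; their union is $D^{n+1}$ and distinct pieces meet only inside the union of the hyperplanes. The sets $N_i=U_i\cap S^n$ are the corresponding outgoing colours of the cleavage of $S^n$, and $S^n\setminus N_i$ is the complement of $N_i$ in $S^n$. *)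

(* Defs.v *)
From HB Require Import structures.
From mathcomp Require Import all_boot all_order all_algebra.
From mathcomp Require Import all_classical all_reals all_analysis.
Set Implicit Arguments. Unset Strict Implicit. Unset Printing Implicit Defensive.
Import Order.TTheory GRing.Theory Num.Theory.
Import numFieldNormedType.Exports.
Local Open Scope classical_set_scope.
Local Open Scope ring_scope.

Section Cleavage.
Variables (R : realType) (n : nat).
Local Notation V := 'rV[R]_n.+1.

Definition dotv (x y : V) : R := \sum_(j < n.+1) x 0 j * y 0 j.

Definition disk : set V := [set x | dotv x x <= 1].
Definition sphere : set V := [set x | dotv x x = 1].

(* an oriented affine hyperplane {x | <x,v> = a} with unit normal v:
   an element of Gr_n(R^{n+1}) (oriented) x R *)
Record ohyperplane := OHyp { hnormal : V ; hoffset : R }.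
Definition hyp_ok (P : ohyperplane) : Prop := dotv (hnormal P) (hnormal P) = 1.
Definition hplus (P : ohyperplane) : set V := [set x | hoffset P <= dotv x (hnormal P)].
Definition hminus (P : ohyperplane) : set V := [set x | dotv x (hnormal P) <= hoffset P].

(* binary rooted planar tree whose internal vertices carry hyperplanes *)
Inductive ctree := CLeaf | CNode of ohyperplane & ctree & ctree.

Fixpoint nleaves (t : ctree) : nat :=
  match t with CLeaf => 1%N | CNode _ l r => (nleaves l + nleaves r)%N end.

Fixpoint pieces (W : set V) (t : ctree) : seq (set V) :=
  match t with
  | CLeaf => [:: W]
  | CNode P l r => pieces (W `&` hplus P) l ++ pieces (W `&` hminus P) r
  end.

Fixpoint valid_cleavage (W : set V) (t : ctree) : Prop :=
  match t with
  | CLeaf => True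
  | CNode P l r =>
      [/\ hyp_ok P, (interior (W `&` hplus P) !=set0),
          (interior (W `&` hminus P) !=set0),
          valid_cleavage (W `&` hplus P) l & valid_cleavage (W `&` hminus P) r]
  end.

(* Lebesgue integral on R^{n+1}, computed as the iterated one-dimensional
   Lebesgue integrals (Fubini); used only for bounded functions with
   compact support (indicators of pieces times coordinates). *)
Fixpoint iter_int (m : nat) (g : (nat -> R) -> R) (x : nat -> R) : R :=
  match m with
  | 0%N => g x
  | m'.+1 => Rintegral (@lebesgue_measure R) setT
               (fun t => iter_int m' g (fun i => if i == m' then t else x i))
  end.

Definition integralV (h : V -> R) : R :=
  iter_int n.+1 (fun x => h (\row_(j < n.+1) x (nat_of_ord j))) (fun _ => 0).

Definition volume (U : set V) : R := integralV (\1_U).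

Definition centroid (U : set V) : V :=
  \row_(j < n.+1) (integralV (fun x => x 0 j * \1_U x) / volume U).

Definition frontier_in (D U : set V) : set V :=
  [set x | D x /\ closure U x /\ closure (D `\` U) x].

Definition segment (s c : V) : set V :=
  [set y | exists t : R, 0 <= t <= 1 /\ y = (1 - t) *: s + t *: c].

End Cleavage.

(* Main.v *)
Require Import Defs.
From HB Require Import structures.
From mathcomp Require Import all_boot all_order all_algebra.
From mathcomp Require Import all_classical all_reals all_analysis.
From mathcomp Require Import measurable_realfun.
From mathcomp Require Import ring lra.
Import Order.TTheory GRing.Theory Num.Theory.
Import numFieldNormedType.Exports.
Local Open Scope classical_set_scope.
Local Open Scope ring_scope.
Section Iter.
Variables (R : realType) (N : nat).
Local Notation Tup := (N.-tuple R).
Local Notation leb := (@lebesgue_measure R).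
Local Notation LR := (measurableTypeR R).

Lemma mid : measurable_fun (T:=LR) (U:=R) setT (fun x => x).
Proof. by move=> _ Y mY; rewrite setTI. Qed.

Definition upd (y : Tup) (m : nat) (t : R) : Tup :=
  [tuple (if val i == m then t else tnth y i) | i < N].

Lemma tnth_upd y m t i : tnth (upd y m t) i = if val i == m then t else tnth y i.
Proof. by rewrite tnth_mktuple. Qed.

Lemma upd2_measurable m : measurable_fun setT (fun p : LR * Tup => upd p.2 m p.1).
Proof.
apply/measurable_fun_tnthP => i /=.
rewrite (_ : _ \o _ = fun p : LR * Tup => if val i == m then p.1 else tnth p.2 i); last first.
  by apply/funext => p /=; rewrite tnth_upd.
case: (val i == m); first exact: (measurableT_comp mid measurable_fst).
exact: (measurableT_comp (measurable_tnth i) measurable_snd).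
Qed.

Lemma upd_measurable y m : measurable_fun (T:=LR) setT (upd y m).
Proof.
apply/measurable_fun_tnthP => i /=.
rewrite (_ : _ \o _ = fun t : LR => if val i == m then t else tnth y i); last first.
  by apply/funext => p /=; rewrite tnth_upd.
case: (val i == m); first exact: mid.
exact: measurable_cst.
Qed.

Definition RI (f : R -> R) := Rintegral leb setT f.

Fixpoint It (m : nat) (G : Tup -> R) (y : Tup) : R :=
  match m with 0 => G y | m'.+1 => RI (fun t => It m' G (upd y m' t)) end.

Definition good (m : nat) (G : Tup -> R) :=
  [/\ measurable_fun setT G, exists M, forall y, `|G y| <= M &
      forall y (i : 'I_N), (m <= i)%N -> 1 < `|tnth y i| -> G y = 0].

Definition I11 : set R := `[-1, 1].

Lemma integrable_cI (c : R) : leb.-integrable setT (EFin \o (fun t => c * \1_I11 t)).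
Proof.
have h1 : leb.-integrable [set: R] (EFin \o \1_I11) := integrable_indic_itv (-1) 1 true false.
have := integrableZl measurableT c h1.
apply: eq_integrable => // x _ /=; by rewrite EFinM.
Qed.

Lemma RI_indic (a b : R) : a <= b -> RI (\1_`[a, b]) = b - a.
Proof.
move=> ab; rewrite /RI /Rintegral integral_indic //= setIT lebesgue_measure_itv /=.
rewrite lte_fin; case: (boolP (a < b)) => [//|].
rewrite -leNgt => ba.
have -> : a = b by apply: le_anti; rewrite ab ba.
by rewrite subrr.

Qed.

Lemma RI_cI (c : R) : RI (fun t => c * \1_I11 t) = c * 2.
Proof.
have h1 : leb.-integrable [set: R] (EFin \o \1_I11) := integrable_indic_itv (-1) 1 true false.
rewrite /RI RintegralZl //.
rewrite -/(RI _) RI_indic; last by lra.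
by rewrite opprK.
Qed.

Lemma sec_integrable m G y : good m G -> (m < N)%N ->
  leb.-integrable setT (EFin \o (fun t => G (upd y m t))).
Proof.
move=> [mG [M bM] sG] mN.
apply: (le_integrable _ _ _ (integrable_cI M)) => //.
  apply/measurable_EFinP; exact: (measurableT_comp mG (upd_measurable y m)).
move=> t _ /=; rewrite !lee_fin.
have hM : 0 <= M by apply: le_trans (bM y).
rewrite indicE /I11.
case: (boolP (t \in `[-1, 1]%classic)) => ht.
  by rewrite mulr1 (ger0_norm hM); exact: bM.
rewrite mulr0 normr0 (sG _ (Ordinal mN)) ?normr0 //= tnth_upd /= eqxx.
rewrite ltNge ler_norml; apply/negP => h; apply: (negP ht).
by apply: mem_set; rewrite /= in_itv /= h.
Qed.

Lemma RI0 : RI (fun _ => 0) = 0.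
Proof. by rewrite /RI Rintegral_cst // mul0r. Qed.

Lemma good_step m G : good m G -> (m < N)%N ->
  good m.+1 (fun y => RI (fun t => G (upd y m t))).
Proof.
move=> gG mN; have [mG [M bM] sG] := gG.
split.
- pose H := fun p : LR * Tup => G (upd p.2 m p.1).
  have mH : measurable_fun setT H := measurableT_comp mG (upd2_measurable m).
  have mHp : measurable_fun setT (EFin \o funrpos H).
    by apply/measurable_EFinP; exact: measurable_funrpos.
  have mHn : measurable_fun setT (EFin \o funrneg H).
    by apply/measurable_EFinP; exact: measurable_funrneg.
  have Hp0 : forall p, (0 <= (EFin \o funrpos H) p)%E by move=> p; rewrite lee_fin funrpos_ge0.
  have Hn0 : forall p, (0 <= (EFin \o funrneg H) p)%E by move=> p; rewrite lee_fin funrneg_ge0.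
  have mFp := measurable_fun_fubini_tonelli_G (m1 := leb) _ mHp Hp0.
  have mFn := measurable_fun_fubini_tonelli_G (m1 := leb) _ mHn Hn0.
  rewrite (_ : (fun y => _) = (fun y => fine (fubini_G leb (EFin \o funrpos H) y)
                                   - fine (fubini_G leb (EFin \o funrneg H) y))).
    apply: measurable_funB.
      exact: (measurableT_comp (fine_measurable measurableT) mFp).
    exact: (measurableT_comp (fine_measurable measurableT) mFn).
  apply/funext => y.
  have iy := sec_integrable _ _ y gG mN.
  rewrite -[in LHS](funrposBneg (fun t => G (upd y m t))) /RI RintegralB //.
  + by apply: integrable_funrpos.
  + by apply: integrable_funrneg.
- exists (M * 2) => y.
  have iy := sec_integrable _ _ y gG mN.
  apply: le_trans (le_normr_Rintegral _ _) _ => //.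
  rewrite -/(RI _) -RI_cI.
  apply: le_Rintegral => //.
  + exact: integrable_norm.
  + exact: integrable_cI.
  move=> t _ /=.
  have hM : 0 <= M by apply: le_trans (bM y).
  rewrite indicE /I11.
  case: (boolP (t \in `[-1, 1]%classic)) => ht.
    by rewrite mulr1; exact: bM.
  rewrite mulr0 (sG _ (Ordinal mN)) ?normr0 //= tnth_upd /= eqxx.
  rewrite ltNge ler_norml; apply/negP => h; apply: (negP ht).
  by apply: mem_set; rewrite /= in_itv /= h.
- move=> y i mi hi.
  rewrite (_ : (fun t => _) = fun _ => 0) ?RI0 //.
  apply/funext => t; apply: (sG _ i) => //; first exact: ltnW.
  rewrite tnth_upd; case: eqP => // E.
  by move: mi; rewrite E ltnn.
Qed.

Lemma good_It m G : good 0 G -> (m <= N)%N -> good m (It m G).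
Proof.
move=> g0; elim: m => [//|m IH] mN /=.
exact: (good_step _ _ (IH (ltnW mN)) mN).
Qed.


Lemma It_add G1 G2 m : good 0 G1 -> good 0 G2 -> (m <= N)%N ->
  forall y, It m (fun z => G1 z + G2 z) y = It m G1 y + It m G2 y.
Proof.
move=> g1 g2; elim: m => [//|m IH] mN y /=.
rewrite (_ : (fun t => It m _ (upd y m t)) =
   fun t => It m G1 (upd y m t) + It m G2 (upd y m t)); last first.
  by apply/funext => t; rewrite IH // ltnW.
rewrite /RI RintegralD //.
  exact: (sec_integrable _ _ y (good_It _ _ g1 (ltnW mN)) mN).
exact: (sec_integrable _ _ y (good_It _ _ g2 (ltnW mN)) mN).
Qed.

Lemma It_scale c G m : good 0 G -> (m <= N)%N ->
  forall y, It m (fun z => c * G z) y = c * It m G y.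
Proof.
move=> g; elim: m => [//|m IH] mN y /=.
rewrite (_ : (fun t => It m _ (upd y m t)) =
   fun t => c * It m G (upd y m t)); last first.
  by apply/funext => t; rewrite IH // ltnW.
rewrite /RI RintegralZl //.
exact: (sec_integrable _ _ y (good_It _ _ g (ltnW mN)) mN).
Qed.

Lemma It_zero m y : It m (fun _ => 0) y = 0.
Proof.
elim: m y => [//|m IH] y /=.
rewrite (_ : (fun t => It m _ (upd y m t)) = fun _ => 0) ?RI0 //.
by apply/funext => t; rewrite IH.
Qed.

Lemma good_add m G1 G2 : good m G1 -> good m G2 -> good m (fun z => G1 z + G2 z).
Proof.
move=> [m1 [M1 b1] s1] [m2 [M2 b2] s2]; split.
- exact: measurable_funD.
- exists (M1 + M2) => y; apply: le_trans (ler_normD _ _) _; exact: lerD.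
- by move=> y i mi hi; rewrite (s1 y i) // (s2 y i) // addr0.
Qed.

Lemma good_scale m c G : good m G -> good m (fun z => c * G z).
Proof.
move=> [m1 [M1 b1] s1]; split.
- exact: measurable_funM.
- exists (`|c| * M1) => y; rewrite normrM; apply: ler_wpM2l => //.
- by move=> y i mi hi; rewrite (s1 y i) // mulr0.
Qed.

Lemma good_zero m : good m (fun _ => 0).
Proof.
split; first exact: measurable_cst.
- by exists 0 => y; rewrite normr0.
- by [].
Qed.

Lemma good_sum m (I : Type) (r : seq I) (Gs : I -> Tup -> R) :
  (forall i, good m (Gs i)) -> good m (fun z => \sum_(i <- r) Gs i z).
Proof.
move=> gi; elim: r => [|a r IH].
  have -> : (fun z => \sum_(i <- [::]) Gs i z) = (fun _ => 0).
    by apply/funext => z; rewrite big_nil.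
  exact: good_zero.
rewrite (_ : (fun z => _) = fun z => Gs a z + \sum_(i <- r) Gs i z).
  exact: good_add.
by apply/funext => z; rewrite big_cons.
Qed.

Lemma It_sum (I : Type) (r : seq I) (Gs : I -> Tup -> R) m y :
  (forall i, good 0 (Gs i)) -> (m <= N)%N ->
  It m (fun z => \sum_(i <- r) Gs i z) y = \sum_(i <- r) It m (Gs i) y.
Proof.
move=> gi mN; elim: r => [|a r IH].
  have -> : (fun z => \sum_(i <- [::]) Gs i z) = (fun _ => 0).
    by apply/funext => z; rewrite big_nil.
  by rewrite big_nil It_zero.
rewrite big_cons -IH (_ : (fun z => _) = fun z => Gs a z + \sum_(i <- r) Gs i z).
  by rewrite It_add //; exact: good_sum.
by apply/funext => z; rewrite big_cons.
Qed.

Lemma It_ge0 G : (forall z, 0 <= G z) -> forall m y, 0 <= It m G y.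
Proof.
move=> G0; elim=> [//|m IH] y /=.
by apply: Rintegral_ge0 => t _; exact: IH.
Qed.

Lemma It_pos G (a b : 'I_N -> R) eps : good 0 G -> (forall z, 0 <= G z) ->
  (forall i, a i < b i) -> 0 < eps ->
  (forall z, (forall i, a i <= tnth z i <= b i) -> eps <= G z) ->
  forall m, (m <= N)%N -> exists2 d, 0 < d &
    forall y, (forall i : 'I_N, (m <= i)%N -> a i <= tnth y i <= b i) -> d <= It m G y.
Proof.
move=> g G0 ab e0 Ge; elim=> [|m IH] mN.
  by exists eps => // y hy; apply: Ge => i; exact: hy.
have [d d0 hd] := IH (ltnW mN).
pose i0 := Ordinal mN.
exists (d * (b i0 - a i0)); first by rewrite mulr_gt0 // subr_gt0.
move=> y hy /=.
have hi : leb.-integrable [set: R] (EFin \o \1_`[a i0, b i0]) :=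
  integrable_indic_itv (a i0) (b i0) true false.
rewrite -RI_indic; last exact: ltW.
rewrite /RI -RintegralZl //.
apply: le_Rintegral => //.
- have := integrableZl measurableT d hi.
  apply: eq_integrable => // x _ /=; by rewrite EFinM.
- exact: (sec_integrable _ _ y (good_It _ _ g (ltnW mN)) mN).
move=> t _ /=.
case: (boolP (t \in `[a i0, b i0]%classic)) => ht; last first.
  by rewrite mulr0; exact: It_ge0.
rewrite mulr1; apply: hd => i mi.
rewrite tnth_upd; case: eqP => E.
  have -> : i = i0 by apply: val_inj.
  by move/set_mem: ht; rewrite /= in_itv.
by apply: hy; rewrite ltn_neqAle mi andbT; apply/eqP => E'; apply: E; rewrite E'.
Qed.

End Iter.
Arguments upd {R N}.
Arguments It {R N}.
Arguments RI {R}.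
Arguments good {R N}.
Arguments tnth_upd {R N}.
Arguments good_It {R N}.
Arguments It_add {R N}.
Arguments It_scale {R N}.
Arguments It_zero {R N}.
Arguments It_sum {R N}.
Arguments It_ge0 {R N}.
Arguments It_pos {R N}.
Arguments good_add {R N}.
Arguments good_scale {R N}.
Arguments good_sum {R N}.
Arguments good_zero {R N}.

Section DotAlg.
Variables (R : realType) (n : nat).
Local Notation V := 'rV[R]_n.+1.
Implicit Types (x y z w : V).

Lemma dotvC x y : dotv x y = dotv y x.
Proof. by apply: eq_bigr => j _; rewrite mulrC. Qed.

Lemma dotvDl x y z : dotv (x + y) z = dotv x z + dotv y z.
Proof. by rewrite /dotv -big_split; apply: eq_bigr => j _; rewrite mxE mulrDl. Qed.

Lemma dotvZl (a : R) x z : dotv (a *: x) z = a * dotv x z.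
Proof. by rewrite /dotv mulr_sumr; apply: eq_bigr => j _; rewrite mxE mulrA. Qed.

Lemma dotvNl x z : dotv (- x) z = - dotv x z.
Proof. by rewrite /dotv -sumrN; apply: eq_bigr => j _; rewrite mxE mulNr. Qed.

Lemma dotvBl x y z : dotv (x - y) z = dotv x z - dotv y z.
Proof. by rewrite dotvDl dotvNl. Qed.

Lemma dotvDr x y z : dotv z (x + y) = dotv z x + dotv z y.
Proof. by rewrite dotvC dotvDl !(dotvC z). Qed.

Lemma dotvZr (a : R) x z : dotv z (a *: x) = a * dotv z x.
Proof. by rewrite dotvC dotvZl dotvC. Qed.

Lemma dotvNr x z : dotv z (- x) = - dotv z x.
Proof. by rewrite dotvC dotvNl dotvC. Qed.

Lemma dotvBr x y z : dotv z (x - y) = dotv z x - dotv z y.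
Proof. by rewrite dotvDr dotvNr. Qed.

Lemma dotv0l z : dotv 0 z = 0.
Proof. by rewrite /dotv big1 // => j _; rewrite mxE mul0r. Qed.

Lemma dotv0r z : dotv z 0 = 0.
Proof. by rewrite dotvC dotv0l. Qed.

Lemma dotv_ge0 x : 0 <= dotv x x.
Proof. by apply: sumr_ge0 => j _; rewrite -expr2 sqr_ge0. Qed.

Lemma coord_sq_le x j : x 0 j ^+ 2 <= dotv x x.
Proof.
rewrite /dotv (bigD1 j) //= -expr2 lerDl.
by apply: sumr_ge0 => k _; rewrite -expr2 sqr_ge0.
Qed.

Lemma coord_le1 x j : dotv x x <= 1 -> `|x 0 j| <= 1.
Proof.
move=> h; have h2 := le_trans (coord_sq_le x j) h.
rewrite ler_norml; move: h2; set a := x 0 j => h2.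
by apply/andP; split; nra.
Qed.

Lemma dotv_gt0 x : x != 0 -> 0 < dotv x x.
Proof.
move=> x0; rewrite lt_def dotv_ge0 andbT; apply/eqP => h.
move/eqP: x0; apply; apply/matrixP => i j; rewrite mxE (ord1 i).
have := coord_sq_le x j; rewrite h => h2.
have : x 0 j ^+ 2 = 0 by apply: le_anti; rewrite h2 sqr_ge0.
by move/eqP; rewrite sqrf_eq0 => /eqP.
Qed.

Lemma dotv_lip x y w (e : R) : (forall j, `|x 0 j - y 0 j| <= e) ->
  `|dotv x w - dotv y w| <= e * \sum_(j < n.+1) `|w 0 j|.
Proof.
move=> h; rewrite -dotvBl /dotv mulr_sumr.
apply: le_trans (ler_norm_sum _ _ _) _; apply: ler_sum => j _.
rewrite normrM [X in X <= _]mulrC mulrC; apply: ler_wpM2r => //.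
by rewrite !mxE; exact: h.
Qed.

Lemma sumabs_ge0 w : 0 <= \sum_(j < n.+1) `|w 0 j|.
Proof. by apply: sumr_ge0. Qed.

End DotAlg.
Arguments dotvC {R n}.
Arguments dotvDl {R n}.
Arguments dotvZl {R n}.
Arguments dotvNl {R n}.
Arguments dotvBl {R n}.
Arguments dotvDr {R n}.
Arguments dotvZr {R n}.
Arguments dotvNr {R n}.
Arguments dotvBr {R n}.
Arguments dotv0l {R n}.
Arguments dotv0r {R n}.
Arguments dotv_ge0 {R n}.
Arguments coord_sq_le {R n}.
Arguments coord_le1 {R n}.
Arguments dotv_gt0 {R n}.
Arguments dotv_lip {R n}.
Arguments sumabs_ge0 {R n}.

Section Bridge.
Variables (R : realType) (n : nat).
Local Notation V := 'rV[R]_n.+1.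
Local Notation N := n.+1.
Local Notation Tup := (N.-tuple R).

Definition ev (y : Tup) : nat -> R := fun i => nth 0 y i.
Definition rowof (y : Tup) : V := \row_(j < N) ev y j.
Definition ztup : Tup := nseq_tuple N (0 : R).

Lemma ev_upd y m t : (m < N)%N -> ev (upd y m t) = fun i => if i == m then t else ev y i.
Proof.
move=> mN; apply/funext => i; rewrite /ev.
case: (ltnP i N) => hi.
  rewrite -[i]/(nat_of_ord (Ordinal hi)) -!tnth_nth tnth_upd.
  by case: eqP.
rewrite !nth_default ?size_tuple //.
by case: eqP => // E; move: mN; rewrite -E ltnNge hi.
Qed.

Lemma iter_It g m y : (m <= N)%N ->
  iter_int m g (ev y) = It m (fun z => g (ev z)) y.
Proof.
elim: m y => [//|m IH] y mN /=.
rewrite /RI; congr Rintegral; apply/funext => t.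
by rewrite -ev_upd // IH // ltnW.
Qed.

Lemma integralV_It (h : V -> R) : integralV h = It N (fun z => h (rowof z)) ztup.
Proof.
rewrite /integralV (_ : (fun _ => 0) = ev ztup); last first.
  by apply/funext => i; rewrite /ev /ztup; case: i => [|i] //=; rewrite nth_nseq if_same.
exact: iter_It.
Qed.

Lemma rowofE z j : rowof z 0 j = tnth z j.
Proof. by rewrite mxE /ev (tnth_nth 0). Qed.

Definition poly (L : seq (V * R)) : set V :=
  [set x | dotv x x <= 1 /\ all (fun p => p.2 <= dotv x p.1) L].

Lemma poly_disk L x : poly L x -> dotv x x <= 1.
Proof. by case. Qed.

Lemma mdot w : measurable_fun setT (fun z : Tup => dotv (rowof z) w).
Proof.
rewrite (_ : (fun z => _) = fun z => \sum_(j < N) (tnth z j * w 0 j)); last first.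
  by apply/funext => z; apply: eq_bigr => j _; rewrite rowofE.
apply: measurable_sum => j; apply: measurable_funM; first exact: measurable_tnth.
exact: measurable_cst.
Qed.

Lemma mdot2 : measurable_fun setT (fun z : Tup => dotv (rowof z) (rowof z)).
Proof.
rewrite (_ : (fun z => _) = fun z => \sum_(j < N) (tnth z j * tnth z j)); last first.
  by apply/funext => z; apply: eq_bigr => j _; rewrite rowofE.
apply: measurable_sum => j; apply: measurable_funM; exact: measurable_tnth.
Qed.

Lemma mle (f : Tup -> R) c : measurable_fun setT f -> measurable [set z | f z <= c].
Proof.
move=> mf; have := mf measurableT _ (measurable_itv `]-oo, c]).
rewrite setTI; congr measurable; apply/seteqP; split => z /=; by rewrite in_itv /=.
Qed.

Lemma mge (f : Tup -> R) c : measurable_fun setT f -> measurable [set z | c <= f z].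
Proof.
move=> mf; have := mf measurableT _ (measurable_itv `[c, +oo[).
rewrite setTI; congr measurable; apply/seteqP; split => z /=; by rewrite in_itv /= andbT.
Qed.

Lemma mpoly L : measurable [set z : Tup | poly L (rowof z)].
Proof.
elim: L => [|p L IH].
  rewrite (_ : [set z | _] = [set z | dotv (rowof z) (rowof z) <= 1]).
    exact: mle mdot2.
  by apply/seteqP; split => z /=; [case|split].
rewrite (_ : [set z | _] = [set z | p.2 <= dotv (rowof z) p.1] `&` [set z | poly L (rowof z)]).
  by apply: measurableI => //; exact: mge (mdot _).
apply/seteqP; split => z /=.
  by case => h /andP[h1 h2].
by case => h1 [h h2]; split => //; apply/andP.
Qed.

Definition GU (U : set V) (z : Tup) : R := \1_U (rowof z).
Definition Gj (U : set V) (j : 'I_N) (z : Tup) : R := rowof z 0 j * \1_U (rowof z).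

Lemma GU_eq U : GU U = \1_[set z | U (rowof z)].
Proof.
apply/funext => z; rewrite /GU !indicE; congr (_%:R).
all: try by apply/idP/idP => /set_mem h; apply/mem_set.
Qed.

Lemma out_disk (U : set V) z (i : 'I_N) : (forall x, U x -> dotv x x <= 1) ->
  1 < `|tnth z i| -> ~ U (rowof z).
Proof.
move=> hU hi /hU /(coord_le1 (rowof z) i); rewrite rowofE => h.
by move: hi; rewrite ltNge h.
Qed.

Lemma good_GU (U : set V) : measurable [set z | U (rowof z)] ->
  (forall x, U x -> dotv x x <= 1) -> good 0 (GU U).
Proof.
move=> mU hU; split.
- by rewrite GU_eq; exact: measurable_indic.
- exists 1 => z; rewrite /GU indicE; case: (_ \in _) => /=; by rewrite ?normr1 ?normr0.
- move=> z i _ hi; rewrite /GU indicE memNset //; exact: out_disk hi.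
Qed.

Lemma good_Gj (U : set V) j : measurable [set z | U (rowof z)] ->
  (forall x, U x -> dotv x x <= 1) -> good 0 (Gj U j).
Proof.
move=> mU hU; split.
- apply: measurable_funM.
    rewrite (_ : (fun z => _) = fun z => tnth z j); first exact: measurable_tnth.
    by apply/funext => z; rewrite rowofE.
  by rewrite -/(GU U) GU_eq; exact: measurable_indic.
- exists 1 => z; rewrite /Gj indicE.
  case: (boolP (rowof z \in U)) => h /=; last by rewrite mulr0 normr0.
  by rewrite mulr1; apply: coord_le1; apply: hU; exact: set_mem.
- move=> z i _ hi; rewrite /Gj indicE memNset ?mulr0 //; exact: out_disk hi.
Qed.

End Bridge.
Arguments ev {R n}.
Arguments rowof {R n}.
Arguments ztup {R n}.
Arguments poly {R n}.
Arguments GU {R n}.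
Arguments Gj {R n}.
Arguments integralV_It {R n}.
Arguments rowofE {R n}.
Arguments mpoly {R n}.
Arguments poly_disk {R n}.
Arguments good_GU {R n}.
Arguments good_Gj {R n}.

Section Key.
Variables (R : realType) (n : nat).
Local Notation V := 'rV[R]_n.+1.
Local Notation N := n.+1.
Local Notation Tup := (N.-tuple R).

Lemma ballE (x y : V) e : ball x e y <-> 0 < e /\ forall i j, ball (x i j) e (y i j).
Proof. by []. Qed.
Lemma ballR (x y : R) e : ball x e y <-> `|x - y| < e.
Proof. by []. Qed.

Lemma affine_comb L (a : R) (w : V) :
  (fun z : Tup => (a + dotv (rowof z) w) * \1_(poly L) (rowof z)) =
  (fun z => a * GU (poly L) z + \sum_(j < N) w 0 j * Gj (poly L) j z).
Proof.
apply/funext => z; rewrite /GU /Gj /dotv mulrDl mulr_suml; congr (_ + _).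
by apply: eq_bigr => j _; ring.
Qed.

Lemma good_affine L (a : R) (w : V) :
  good 0 (fun z : Tup => (a + dotv (rowof z) w) * \1_(poly L) (rowof z)).
Proof.
rewrite affine_comb.
have mU := mpoly L.
apply: good_add; first exact/good_scale/(good_GU _ mU (@poly_disk _ _ L)).
apply: good_sum => j; exact/good_scale/(good_Gj _ j mU (@poly_disk _ _ L)).
Qed.

Lemma key_affine L (a : R) (w : V) :
  integralV (fun x => (a + dotv x w) * \1_(poly L) x) =
  a * volume (poly L) + \sum_(j < N) w 0 j * integralV (fun x => x 0 j * \1_(poly L) x).
Proof.
have mU := mpoly L.
have gU := good_GU _ mU (@poly_disk _ _ L).
have gj := fun j => good_Gj _ j mU (@poly_disk _ _ L).
rewrite /volume !integralV_It affine_comb.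
rewrite It_add //; last first.
- by apply: good_sum => j; exact: good_scale.
- exact: good_scale.
rewrite It_scale // It_sum //; last by move=> j; exact: good_scale.
congr (_ + _); apply: eq_bigr => j _; by rewrite It_scale // integralV_It.
Qed.

Lemma key_pos L (a : R) (w x0 : V) e : 0 < e -> (forall y, ball x0 e y -> poly L y) ->
  (forall x, poly L x -> 0 <= a + dotv x w) -> 0 < a + dotv x0 w ->
  0 < integralV (fun x => (a + dotv x w) * \1_(poly L) x).
Proof.
move=> e0 hb hnn f0p.
set f0 := a + dotv x0 w in f0p.
set S := \sum_(j < N) `|w 0 j|.
have S0 : 0 <= S by exact: sumabs_ge0.
set r := Num.min (e / 2) (f0 / (2 * (S + 1))).
have r0 : 0 < r by rewrite lt_min !divr_gt0 //; nra.
have re : r <= e / 2 by rewrite ge_min lexx.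
have rf : r <= f0 / (2 * (S + 1)) by rewrite ge_min lexx orbT.
rewrite integralV_It.
set G := fun z => _.
have gG : good 0 G := good_affine L a w.
have G0 : forall z, 0 <= G z.
  move=> z; rewrite /G indicE; case: (boolP (rowof z \in poly L)) => h.
    by rewrite mulr1; apply: hnn; exact: set_mem.
  by rewrite mulr0.
have hbox : forall z : Tup, (forall i, x0 0 i - r <= tnth z i <= x0 0 i + r) -> f0 / 2 <= G z.
  move=> z hz.
  have hd : forall j, `|rowof z 0 j - x0 0 j| <= r.
    by move=> j; rewrite rowofE ler_distl; exact: hz.
  have pz : poly L (rowof z).
    apply: hb; split => // i j; rewrite (ord1 i) ballR distrC.
    by apply: le_lt_trans (hd j) _; apply: le_lt_trans re _; rewrite ltr_pdivrMr //; nra.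
  rewrite /G indicE mem_set // mulr1.
  have := dotv_lip (rowof z) x0 w r hd; rewrite -/S => hl.
  have h1 : r * S <= f0 / 2.
    apply: le_trans (ler_wpM2r S0 rf) _.
    have e2 : f0 / 2 * 2 = f0 by rewrite divfK // pnatr_eq0.
    rewrite mulrAC ler_pdivrMr; last by nra.
    set h := f0 / 2 in e2 *; nra.
  move: hl; rewrite ler_norml => /andP[hl _].
  rewrite /f0 in h1 *; nra.
have hab : forall i : 'I_N, x0 0 i - r < x0 0 i + r by move=> i; lra.
have he : 0 < f0 / 2 by rewrite divr_gt0.
have [d d0 hd] := It_pos G (fun i => x0 0 i - r) (fun i => x0 0 i + r) (f0 / 2) gG G0 hab he hbox N (leqnn N). apply: (lt_le_trans d0); apply: hd => i hi.
by move: (ltn_ord i); rewrite ltnNge hi.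
Qed.

End Key.
Arguments ballE {R n}.
Arguments ballR {R}.
Arguments affine_comb {R n}.
Arguments good_affine {R n}.
Arguments key_affine {R n}.
Arguments key_pos {R n}.

Section Centroid.
Variables (R : realType) (n : nat).
Local Notation V := 'rV[R]_n.+1.
Local Notation N := n.+1.

Definition unitL (L : seq (V * R)) := all (fun p => dotv p.1 p.1 == 1) L.

Lemma dotv_sq (x c : V) : dotv (x - c) (x - c) = dotv x x - 2 * dotv x c + dotv c c.
Proof. rewrite !dotvBl !dotvBr (dotvC c x); ring. Qed.

Lemma dot_le_half (x c : V) : 2 * dotv x c <= dotv x x + dotv c c.
Proof. have := dotv_ge0 (x - c); rewrite dotv_sq; lra. Qed.

Lemma unit_coord (w : V) j : dotv w w = 1 -> `|w 0 j| <= 1.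
Proof. by move=> h; apply: coord_le1; rewrite h. Qed.

Section Fixed.
Variables (L : seq (V * R)) (x0 : V) (e : R).
Hypothesis uL : unitL L.
Hypothesis e0 : 0 < e.
Hypothesis hb : forall y, ball x0 e y -> poly L y.
Local Notation U := (poly L).
Local Notation vol := (volume U).
Local Notation I j := (integralV (fun x : V => x 0 j * \1_U x)).

Lemma x0U : U x0.
Proof. by apply: hb; split => // i j; exact: ballxx. Qed.

Lemma x0_lin p : p \in L -> p.2 < dotv x0 p.1.
Proof.
move=> pL; rewrite ltNge; apply/negP => hle.
have u : dotv p.1 p.1 = 1 by move/allP: uL => /(_ p pL) /eqP.
have e2 : 0 < e / 2 by rewrite divr_gt0.
pose z := x0 - (e / 2) *: p.1.
have : U z.
  apply: hb; split => // i j; rewrite ballR (ord1 i) !mxE opprB addrC subrK.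
  rewrite normrM (ger0_norm (ltW e2)).
  apply: le_lt_trans (ler_wpM2l (ltW e2) (unit_coord _ j u)) _.
  rewrite mulr1; lra.
case => _ /allP /(_ p pL).
rewrite /z dotvBl dotvZl u mulr1 => h.
have : e / 2 > 0 by rewrite divr_gt0.
lra.
Qed.

Lemma x0_disk : dotv x0 x0 < 1.
Proof.
rewrite ltNge; apply/negP => hle.
have x0d := poly_disk _ _ x0U.
have e2 : 0 < e / 2 by rewrite divr_gt0.
pose z := x0 + (e / 2) *: x0.
have : U z.
  apply: hb; split => // i j; rewrite ballR (ord1 i) !mxE opprD addrA subrr add0r normrN.
  rewrite normrM (ger0_norm (ltW e2)).
  apply: le_lt_trans (ler_wpM2l (ltW e2) (coord_le1 x0 j x0d)) _.
  rewrite mulr1; lra.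
case => hz _.
move: hz; rewrite /z dotvDl !dotvDr !dotvZl !dotvZr.
have : e / 2 > 0 by rewrite divr_gt0.
set d := e / 2; set q := dotv x0 x0 => d0 h.
have hq : 1 <= q := hle.
nra.
Qed.

Lemma vol_gt0 : 0 < vol.
Proof.
have := key_pos L 1 0 x0 e e0 hb.
rewrite key_affine mul1r.
under eq_bigr do rewrite mxE mul0r.
rewrite big1 // addr0; apply.
- by move=> x _; rewrite dotv0r addr0.
- by rewrite dotv0r addr0.
Qed.

Lemma dot_centroid (w : V) : vol * dotv (centroid U) w = \sum_(j < N) w 0 j * I j.
Proof.
rewrite /dotv mulr_sumr; apply: eq_bigr => j _.
rewrite mxE; have v0 := vol_gt0.
rewrite -/(volume U); field; exact: lt0r_neq0.
Qed.

Lemma centroid_lin p : p \in L -> p.2 < dotv (centroid U) p.1.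
Proof.
move=> pL.
have := key_pos L (- p.2) p.1 x0 e e0 hb.
rewrite key_affine -dot_centroid => h.
have v0 := vol_gt0.
have h1 : forall x, U x -> 0 <= - p.2 + dotv x p.1.
  by move=> x [_ /allP /(_ p pL)]; lra.
have h2 : 0 < - p.2 + dotv x0 p.1 by have := x0_lin _ pL; lra.
move: (h h1 h2) v0; set k := dotv (centroid U) p.1; set v := volume U => H1 H2; nra.
Qed.

Lemma centroid_disk : dotv (centroid U) (centroid U) < 1.
Proof.
set c := centroid U.
set q := dotv c c.
have := key_pos L ((1 + q) / 2) (- c) x0 e e0 hb.
rewrite key_affine -dot_centroid dotvNr => h.
have v0 := vol_gt0.
have h1 : forall x, U x -> 0 <= (1 + q) / 2 + dotv x (- c).
  move=> x hx; rewrite dotvNr.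
  have := dot_le_half x c; have := poly_disk _ _ hx; rewrite -/q; lra.
have h2 : 0 < (1 + q) / 2 - dotv x0 c.
  have := dot_le_half x0 c; have := x0_disk; rewrite -/q; lra.
move: (h h1 h2) v0; rewrite dotvNr -/c -/q; set v := volume U => H1 H2; nra.
Qed.

End Fixed.
End Centroid.
Arguments unitL {R n}.
Arguments dotv_sq {R n}.
Arguments dot_le_half {R n}.
Arguments unit_coord {R n}.
Arguments x0U {R n}.
Arguments x0_lin {R n}.
Arguments x0_disk {R n}.
Arguments vol_gt0 {R n}.
Arguments dot_centroid {R n}.
Arguments centroid_lin {R n}.
Arguments centroid_disk {R n}.

Section Geo.
Variables (R : realType) (n : nat).
Local Notation V := 'rV[R]_n.+1.
Variable L : seq (V * R).
Local Notation U := (poly L).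
Local Notation D := (@disk R n).

Lemma near_lin (y w : V) b : dotv y w < b ->
  exists2 e, 0 < e & forall z, ball y e z -> dotv z w < b.
Proof.
move=> h; set S := \sum_(j < n.+1) `|w 0 j|.
have S0 : 0 <= S := sumabs_ge0 w.
set B := b - dotv y w.
have B0 : 0 < B by rewrite /B subr_gt0.
have hS1' : 0 < S + 1 by lra.
exists (B / (S + 1)); first by rewrite divr_gt0.
move=> z [_ hz].
set e := B / (S + 1).
have hS1 : 0 < S + 1 by lra.
have hE : e * S + e = B.
  by rewrite -{2}(mulr1 e) -mulrDr /e divfK // lt0r_neq0.
have hd : forall j, `|z 0 j - y 0 j| <= e.
  by move=> j; have := hz 0 j; rewrite ballR distrC => /ltW.
have := dotv_lip z y w e hd; rewrite -/S ler_norml => /andP[_ h2].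
have e0 : 0 < e by rewrite divr_gt0.
move: hE h2; rewrite /B; set eS := e * S; lra.
Qed.

Lemma near_lin_ge (y w : V) b : b < dotv y w ->
  exists2 e, 0 < e & forall z, ball y e z -> b < dotv z w.
Proof.
move=> h; have h' : dotv y (- w) < - b by rewrite dotvNr ltrN2.
have [e e0 he] := near_lin y (- w) (- b) h'.
by exists e => // z /he; rewrite dotvNr ltrN2.
Qed.

Lemma near_all (y : V) (K : seq (V * R)) : all (fun p => p.2 < dotv y p.1) K ->
  exists2 e, 0 < e & forall z, ball y e z -> all (fun p => p.2 < dotv z p.1) K.
Proof.
elim: K => [|p K IH] /=; first by move=> _; exists 1.
move=> /andP[h1 h2].
have [e1 e10 he1] := near_lin_ge y p.1 p.2 h1.
have [e2 e20 he2] := IH h2.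
exists (Num.min e1 e2); first by rewrite lt_min e10 e20.
move=> z hz; apply/andP; split.
  by apply: he1; apply: le_ball hz; rewrite ge_min lexx.
by apply: he2; apply: le_ball hz; rewrite ge_min lexx orbT.
Qed.

Lemma notU_sep p : ~ U p -> exists w b, dotv p w < b /\ forall z, dotv z w < b -> ~ U z.
Proof.
move=> np.
case: (boolP (dotv p p <= 1)) => hd; last first.
  exists (- p), (- ((1 + dotv p p) / 2)); split.
    by rewrite dotvNr ltrN2; move: hd; rewrite -ltNge; lra.
  move=> z; rewrite dotvNr ltrN2 => hz [hz1 _].
  have := dot_le_half z p; lra.
case: (boolP (all (fun q => q.2 <= dotv p q.1) L)) => ha.
  by exfalso; apply: np; split.
case/allPn: ha => q qL hq.
exists q.1, q.2; split; first by rewrite ltNge.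
move=> z hz [_ /allP /(_ q qL)] /= h.
by move: hz; rewrite ltNge h.
Qed.

Lemma notU_closure p : ~ U p -> ~ closure U p.
Proof.
move=> /notU_sep [w [b [h1 h2]]] hc.
have [e e0 he] := near_lin p w b h1.
have [z [Uz bz]] := hc _ (nbhsx_ballx p e e0).
exact: (h2 z (he z bz)).
Qed.

Lemma SI_not_closure y : all (fun p => p.2 < dotv y p.1) L -> ~ closure (D `\` U) y.
Proof.
move=> /near_all [e e0 he] hc.
have [z [[Dz nUz] bz]] := hc _ (nbhsx_ballx y e e0).
apply: nUz; split => //.
have := he z bz; apply: sub_all => q /=; exact: ltW.
Qed.

Section Seg.
Variables (c s : V).
Hypothesis hc : dotv c c < 1.
Hypothesis hcl : all (fun p => p.2 < dotv c p.1) L.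
Hypothesis hs : dotv s s = 1.
Hypothesis ns : ~ U s.

Definition seg (t : R) : V := (1 - t) *: s + t *: c.

Lemma dot_seg t w : dotv (seg t) w = (1 - t) * dotv s w + t * dotv c w.
Proof. by rewrite /seg dotvDl !dotvZl. Qed.

Lemma seg_disk t : 0 <= t <= 1 -> dotv (seg t) (seg t) <= 1.
Proof.
move=> /andP[t0 t1].
rewrite dot_seg /seg !dotvDr !dotvZr (dotvC c s).
have := dot_le_half s c.
set ss := dotv s s; set cc := dotv c c; set sc := dotv s c.
have h0 : 0 <= t * (1 - t) by nra.
have hs' : ss = 1 := hs.
have hc' : cc < 1 := hc.
move=> h; nra.
Qed.

Lemma Uc : U c.
Proof. split; first exact: ltW; apply: sub_all hcl => q /=; exact: ltW. Qed.

Lemma seg0 : seg 0 = s.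
Proof. by rewrite /seg subr0 scale1r scale0r addr0. Qed.
Lemma seg1 : seg 1 = c.
Proof. by rewrite /seg subrr scale0r add0r scale1r. Qed.

Definition Aset := [set t : R | (0 <= t <= 1) /\ U (seg t)].
Definition t0 := inf Aset.

Lemma A1 : Aset 1.
Proof. by split; [rewrite ler01 lexx | rewrite seg1; exact: Uc]. Qed.

Lemma A_lb : lbound Aset 0.
Proof. by move=> t [/andP[]]. Qed.

Lemma A_hasinf : has_inf Aset.
Proof. by split; [exists 1; exact: A1 | exists 0; exact: A_lb]. Qed.

Lemma t0_ge0 : 0 <= t0.
Proof. by apply: lb_le_inf; [exists 1; exact: A1 | exact: A_lb]. Qed.

Lemma t0_le1 : t0 <= 1.
Proof. by apply: ge_inf; [exists 0; exact: A_lb | exact: A1]. Qed.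

Lemma t0_le t : Aset t -> t0 <= t.
Proof. by move=> At; apply: ge_inf => //; exists 0; exact: A_lb. Qed.

Lemma U_t0 : U (seg t0).
Proof.
apply: contrapT => /notU_sep [w [b [h1 h2]]].
move: h1; rewrite dot_seg => h1.
set ds := dotv s w in h1; set dc := dotv c w in h1.
set be := dc - ds.
set ga := b - ((1 - t0) * ds + t0 * dc).
have ga0 : 0 < ga by rewrite /ga subr_gt0.
set de := ga / (`|be| + 1).
have de0 : 0 < de by rewrite divr_gt0 //; have := normr_ge0 be; lra.
have hb1 : 0 < `|be| + 1 by have := normr_ge0 be; lra.
have hde : de * `|be| + de = ga.
  by rewrite -{2}(mulr1 de) -mulrDr /de divfK // lt0r_neq0.
have [t At ht] := inf_adherent de0 A_hasinf.
have tt0 := t0_le _ At.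
case: At => _ Ut; apply: (h2 (seg t)) Ut.
rewrite dot_seg -/ds -/dc.
have hb : be <= `|be| := ler_norm be.
have hb2 : 0 <= `|be| := normr_ge0 be.
have k1 : (t - t0) * be <= (t - t0) * `|be| by apply: ler_wpM2l; lra.
have k2 : (t - t0) * `|be| <= de * `|be| by apply: ler_wpM2r => //; lra.
move: hde; rewrite /ga /be in k1 k2 *; rewrite -/t0 in ht; nra.
Qed.

Lemma t0_gt0 : 0 < t0.
Proof.
rewrite lt_def t0_ge0 andbT; apply/eqP => E.
by apply: ns; rewrite -seg0 -E; exact: U_t0.
Qed.

Lemma before_t0 t : 0 <= t -> t < t0 -> ~ U (seg t).
Proof.
move=> t0' tt Ut.
have : t0 <= t by apply: t0_le; split => //; rewrite t0' /=; exact: (ltW (lt_le_trans tt t0_le1)).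
by rewrite leNgt tt.
Qed.

Lemma after_t0 t : t0 < t -> t <= 1 -> all (fun p => p.2 < dotv (seg t) p.1) L.
Proof.
move=> tt t1; apply/allP => p pL.
have [_ /allP /(_ p pL) h0] := U_t0.
have h1 : p.2 < dotv c p.1 by move/allP: hcl => /(_ p pL).
move: h0 h1; rewrite /= !dot_seg.
set ds := dotv s p.1; set dc := dotv c p.1; set a := p.2 => h0 h1.
have id : (1 - t0) * ((1 - t) * ds + t * dc - a) =
          (1 - t) * ((1 - t0) * ds + t0 * dc - a) + (t - t0) * (dc - a) by ring.
have k1 : 0 <= (1 - t) * ((1 - t0) * ds + t0 * dc - a) by apply: mulr_ge0; lra.
have k2 : 0 < (t - t0) * (dc - a) by apply: mulr_gt0; lra.
have k3 : 0 < 1 - t0 by lra.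
have : 0 < (1 - t0) * ((1 - t) * ds + t * dc - a) by lra.
rewrite pmulr_rgt0 //; lra.
Qed.

Lemma seg_coord_bound j : `|s 0 j - c 0 j| <= 2.
Proof.
have hs1 : `|s 0 j| <= 1 by apply: coord_le1; rewrite hs.
have hc1 : `|c 0 j| <= 1 by apply: coord_le1; exact: ltW.
apply: le_trans (ler_normB _ _) _; lra.
Qed.

Lemma frontier_t0 : frontier_in D U (seg t0).
Proof.
split; first by apply: seg_disk; rewrite t0_ge0 t0_le1.
split; first exact/subset_closure/U_t0.
move=> B /nbhs_ballP [e /= e0 heB].
set ka := Num.min t0 (e / 4) / 2.
have ka0 : 0 < ka by rewrite divr_gt0 // lt_min t0_gt0 divr_gt0.
have kat : ka <= t0 / 2 by rewrite ler_pdivrMr // divfK // ge_min lexx.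
have kae : ka <= e / 8.
  rewrite /ka ler_pdivrMr // (_ : e / 8 * 2 = e / 4); last by field.
  by rewrite ge_min lexx orbT.
exists (seg (t0 - ka)); split; last first.
  apply: heB; split => // i j; rewrite ballR (ord1 i) /seg !mxE.
  have := seg_coord_bound j.
  set sj := s 0 j; set cj := c 0 j => hb.
  have -> : (1 - t0) * sj + t0 * cj - ((1 - (t0 - ka)) * sj + (t0 - ka) * cj) = ka * (cj - sj) by ring.
  rewrite normrM (ger0_norm (ltW ka0)) distrC.
  apply: le_lt_trans (ler_wpM2l (ltW ka0) hb) _; lra.
have h0 : 0 <= t0 - ka by have := t0_gt0; lra.
split.
  by apply: seg_disk; rewrite h0 /=; have := t0_le1; lra.
by apply: before_t0 => //; lra.
Qed.

Lemma frontier_unique t : 0 <= t <= 1 -> frontier_in D U (seg t) -> t = t0.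
Proof.
move=> /andP[ta tb] [_ [cU cDU]].
case: (ltgtP t t0) => // h.
  by exfalso; exact: (notU_closure _ (before_t0 _ ta h) cU).
by exfalso; exact: (SI_not_closure _ (after_t0 _ h tb) cDU).
Qed.

End Seg.

Lemma c_not_frontier c : all (fun p => p.2 < dotv c p.1) L -> ~ frontier_in D U c.
Proof. by move=> hcl [_ [_ h]]; exact: (SI_not_closure _ hcl h). Qed.

End Geo.
Arguments near_lin {R n}.
Arguments near_lin_ge {R n}.
Arguments near_all {R n}.
Arguments notU_sep {R n}.
Arguments notU_closure {R n}.
Arguments SI_not_closure {R n}.
Arguments seg {R n}.
Arguments dot_seg {R n}.
Arguments seg_disk {R n}.
Arguments Uc {R n}.
Arguments seg0 {R n}.
Arguments seg1 {R n}.
Arguments Aset {R n}.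
Arguments t0 {R n}.
Arguments frontier_t0 {R n}.
Arguments frontier_unique {R n}.
Arguments c_not_frontier {R n}.

Section Final.
Variables (R : realType) (n : nat).
Local Notation V := 'rV[R]_n.+1.
Local Notation N := n.+1.

Lemma disk_poly : @disk R n = @poly R n [::].
Proof. by apply/seteqP; split => x /=; rewrite /disk /poly /=; [move=> h; split | case]. Qed.

Lemma poly_plus (L : seq (V * R)) (P : ohyperplane R n) : poly L `&` hplus P = poly ((hnormal P, hoffset P) :: L).
Proof.
apply/seteqP; split => x /=.
  by case=> [[h1 h2] h3]; split => //=; rewrite h2 andbT.
by case=> h1 /andP[h2 h3]; split.
Qed.

Lemma poly_minus (L : seq (V * R)) (P : ohyperplane R n) : poly L `&` hminus P = poly ((- hnormal P, - hoffset P) :: L).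
Proof.
apply/seteqP; split => x /=.
  by case=> [[h1 h2] h3]; split => //=; rewrite h2 andbT dotvNr lerN2.
by case=> h1 /andP[h2 h3]; split => //; move: h2; rewrite /hminus /= dotvNr lerN2.
Qed.

Lemma pieces_poly (t : ctree R n) (L : seq (V * R)) : unitL L ->
  valid_cleavage (poly L) t -> interior (poly L) !=set0 ->
  forall i, (i < size (pieces (poly L) t))%N ->
  exists L', [/\ nth set0 (pieces (poly L) t) i = poly L', unitL L' &
                 interior (poly L') !=set0].
Proof.
elim: t L => [|P l IHl r IHr] L uL /= hv hint i hi.
  by move: hi; rewrite ltnS leqn0 => /eqP ->; exists L.
move: hv hi; rewrite poly_plus poly_minus => -[hP h1 h2 vl vr] hi.
have uL' : all (fun p => dotv p.1 p.1 == 1) L := uL.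
have uP : unitL ((hnormal P, hoffset P) :: L) by rewrite /unitL /= uL' andbT; apply/eqP.
have uM : unitL ((- hnormal P, - hoffset P) :: L).
  by rewrite /unitL /= uL' andbT dotvNl dotvNr opprK; apply/eqP.
rewrite nth_cat; move: hi; rewrite size_cat => hi.
case: ifP => hil.
  exact: IHl.
apply: IHr => //.
have h0 : (size (pieces (poly ((hnormal P, hoffset P) :: L)) l) <= i)%N by rewrite leqNgt hil.
by rewrite ltn_subLR.
Qed.

Lemma disk_interior : interior (@disk R n) !=set0.
Proof.
exists 0; apply/nbhs_ballP.
pose e : R := (N%:R)^-1.
have Npos : 0 < N%:R :> R by rewrite ltr0n.
have e0 : 0 < e by rewrite invr_gt0.
have e1 : e <= 1 by rewrite invr_le1 // ?ler1n // unitfE lt0r_neq0.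
exists e => // x [_ hx].
rewrite /disk /= /dotv.
apply: le_trans (_ : \sum_(j < N) e * e <= 1).
  apply: ler_sum => j _.
  have := hx 0 j; rewrite ballR mxE sub0r normrN ltr_norml => /andP[a b].
  nra.
by rewrite sumr_const card_ord -mulr_natr -mulrA mulVf ?mulr1 // lt0r_neq0.
Qed.

Lemma quad_unique (c d : V) (m1 m2 : R) : dotv c c < 1 -> 0 < m1 -> 0 < m2 ->
  dotv (c + m1 *: d) (c + m1 *: d) = 1 -> dotv (c + m2 *: d) (c + m2 *: d) = 1 -> m1 = m2.
Proof.
move=> hc h1 h2; rewrite !dotvDl !dotvDr !dotvZl !dotvZr (dotvC d c).
have dd0 := dotv_ge0 d.
set cc := dotv c c; set cd := dotv c d; set dd := dotv d d => E1 E2.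
apply/eqP; apply/negP => /negP ne.
have : (m1 - m2) * (2 * cd + (m1 + m2) * dd) = 0.
  move: E1 E2; rewrite -/cc => E1 E2; nra.
move/eqP; rewrite mulf_eq0 subr_eq0 (negPf ne) /= => /eqP h.
have k : 0 <= m1 * m2 * dd by rewrite !mulr_ge0 // ltW.
have h' : m1 * (2 * cd + (m1 + m2) * dd) = 0 by rewrite h mulr0.
have hc' : cc < 1 := hc.
nra.
Qed.

Lemma seg_inv (s c y : V) (t : R) : t < 1 -> y = (1 - t) *: s + t *: c ->
  s = c + (1 - t)^-1 *: (y - c).
Proof.
move=> t1 ->; apply/matrixP => i j; rewrite !mxE.
have : 1 - t != 0 by rewrite subr_eq0 gt_eqF.
move=> h; field; exact: h.
Qed.

End Final.
Arguments disk_poly {R n}.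
Arguments poly_plus {R n}.
Arguments poly_minus {R n}.
Arguments pieces_poly {R n}.
Arguments disk_interior {R n}.
Arguments quad_unique {R n}.
Arguments seg_inv {R n}.

Theorem mainTheorem1 (R : realType) (n : nat) (t : ctree R n) :
  (1 <= n)%N ->
  valid_cleavage (@disk R n) t ->
  let Us := pieces (@disk R n) t in
  let beta : set 'rV[R]_n.+1 :=
    \bigcup_(i in [set i : nat | (i < size Us)%N]) frontier_in (@disk R n) (nth set0 Us i) in
  forall i : nat, (i < size Us)%N ->
    let U := nth set0 Us i in
    let c := centroid U in
    let C := @sphere R n `\` (U `&` @sphere R n) in
    (forall s, C s ->
       (exists! y, segment s c y /\ frontier_in (@disk R n) U y) /\
       (forall y, segment s c y -> frontier_in (@disk R n) U y -> beta y)) /\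
    (forall s1 s2 y, C s1 -> C s2 -> connected_component C s1 s2 ->
       segment s1 c y -> frontier_in (@disk R n) U y ->
       segment s2 c y -> frontier_in (@disk R n) U y -> s1 = s2).
Proof.
move=> n1 hv Us beta i hi U c C.
have E := @disk_poly R n.
have hv' : valid_cleavage (poly [::]) t by rewrite -E.
have hint : interior (@poly R n [::]) !=set0 by rewrite -E; exact: disk_interior.
have hi' : (i < size (pieces (@poly R n [::]) t))%N by rewrite -E.
have [L [UE uL [x0 hx0]]] := pieces_poly t [::] (erefl true) hv' hint i hi'.
have UL : U = poly L by rewrite /U /Us E.
move/nbhs_ballP: hx0 => [e /= e0 hb0].
have hb : forall y, ball x0 e y -> poly L y by move=> y hy; apply: hb0; exact: hy.
have hcd : dotv c c < 1 by rewrite /c UL; exact: (centroid_disk L x0 e e0 hb).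
have hcl : all (fun p => p.2 < dotv c p.1) L.
  by apply/allP => p pL; rewrite /c UL; exact: (centroid_lin L x0 e uL e0 hb p pL).
have hbeta : forall y, frontier_in (@disk R n) (poly L) y -> beta y.
  by move=> y hf; rewrite /beta; exists i => //; rewrite -/Us -/U UL.
rewrite /C UL; clearbody c; split.
- move=> s [hs hns].
  have ns : ~ poly L s by move=> h; apply: hns.
  have hs' : dotv s s = 1 := hs.
  split; last by move=> y _; exact: hbeta.
  exists (seg c s (t0 L c s)); split.
    split; last by apply: frontier_t0.
    exists (t0 L c s); split => //.
    by apply/andP; split; [apply: t0_ge0 | apply: t0_le1].
  move=> y' [[t' [ht' ->]] hf].
  have -> // : t' = t0 L c s.
  by apply: frontier_unique => //.
- move=> s1 s2 y [hs1 _] [hs2 _] _ [t1 [ht1 hy1]] hf1 [t2 [ht2 hy2]] hf2.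
  have hs1' : dotv s1 s1 = 1 := hs1.
  have hs2' : dotv s2 s2 = 1 := hs2.
  have ltk : forall tk sk, 0 <= tk <= 1 -> y = (1 - tk) *: sk + tk *: c -> tk < 1.
    move=> tk sk /andP[_ tk1] hy; rewrite lt_neqAle tk1 andbT; apply/eqP => E1.
    move: hy; rewrite E1 subrr scale0r add0r scale1r => hyc.
    by apply: (c_not_frontier L c hcl); rewrite -hyc.
  have t1l := ltk _ _ ht1 hy1.
  have t2l := ltk _ _ ht2 hy2.
  have e1 := seg_inv s1 c y t1 t1l hy1.
  have e2 := seg_inv s2 c y t2 t2l hy2.
  have m1 : 0 < (1 - t1)^-1 by rewrite invr_gt0 subr_gt0.
  have m2 : 0 < (1 - t2)^-1 by rewrite invr_gt0 subr_gt0.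
  have := quad_unique c (y - c) _ _ hcd m1 m2.
  rewrite -e1 -e2 => /(_ hs1' hs2') meq.
  by rewrite e1 e2 meq.
Qed.
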